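(* Let $n$ be an integer with $n=u^4+v^4=r^4+s^4$ for integers $u,v,r,s$ satisfying $\gcd(u,v,r,s)=1$. If $p$ is an odd prime with $p\mid n$, then $p\equiv 1\pmod 8$. *)

(* Defs.v *)
From mathcomp Require Import all_boot all_algebra.
Set Implicit Arguments. Unset Strict Implicit. Unset Printing Implicit Defensive.

(* Main.v *)
Require Import Defs.
From mathcomp Require Import all_boot all_algebra.
From mathcomp Require Import finfield.
Import GRing.Theory Num.Theory.
Local Open Scope ring_scope.

Lemma Fp_int0 (p : nat) (z : int) : prime p ->
  (z%:~R == 0 :> 'F_p) = (p %| `|z|%N)%N.
Proof.
move=> pp; have ch := pchar_Fp pp.
case: z => m.
  by rewrite /= (dvdn_pcharf ch).
by rewrite NegzE mulrNz oppr_eq0 /= (dvdn_pcharf ch).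
Qed.

Lemma two_neq0 (p : nat) : prime p -> odd p -> (1 + 1 != 0 :> 'F_p).
Proof.
move=> pp op; have ch := pchar_Fp pp.
rewrite -[1 + 1]/(2%:R) -(dvdn_pcharf ch).
apply/negP => /(dvdn_leq (isT : (0 < 2)%N)); rewrite leq_eqVlt => /orP [/eqP E|].
  by move: op; rewrite E.
by move: (prime_gt1 pp); case: p {pp ch op} => [|[|]].
Qed.

Lemma key_gen (F : fieldType) (a : F) (m : nat) : 1 + 1 != 0 :> F -> a != 0 ->
  a ^+ 4 = -1 -> a ^+ m = a -> odd m -> (m %% 8 = 1)%N.
Proof.
move=> t2 a0 a4 ap op.
have nA4 : a ^+ 4 != 1.
  by rewrite a4; apply/negP => /eqP h; move: t2; rewrite -{1}h addNr eqxx.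
have a8 : a ^+ 8 = 1 by rewrite (_ : 8 = 4 * 2)%N // exprM a4 expr2 mulrNN mulr1.
have := divn_eq m 8; set q := (m %/ 8)%N; set r := (m %% 8)%N => pe.
have ar : a ^+ r = a by move: ap; rewrite pe exprD mulnC exprM a8 expr1n mul1r.
have rlt : (r < 8)%N by rewrite ltn_pmod.
have ro : odd r.
  by move: op; rewrite pe oddD oddM /= andbF.
have ar1 : a ^+ r.-1 = 1.
  apply: (mulIf a0); rewrite mul1r -exprSr prednK //; by case: (r) ro.
move: rlt ro ar1; case: (r) => [|[|[|[|[|[|[|[|]]]]]]]] //= _ _ h.
- by move: nA4; rewrite (_ : 4 = 2 * 2)%N // exprM h expr1n eqxx.
- by move: nA4; rewrite h eqxx.
- move: nA4; rewrite (_ : 6 = 4 + 2)%N // exprD a4 mulN1r in h.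
  have h2 : a ^+ 2 = -1 by rewrite -h opprK.
  by rewrite (_ : 4 = 2 * 2)%N // exprM h2 expr2 mulrNN mulr1 eqxx.
Qed.

Lemma key (p : nat) (x y : 'F_p) : prime p -> odd p -> x != 0 -> y != 0 ->
  x ^+ 4 + y ^+ 4 = 0 -> (p %% 8 = 1)%N.
Proof.
move=> pp op x0 y0 e.
set a := x / y.
have a4 : a ^+ 4 = -1.
  rewrite /a expr_div_n; apply: (mulIf (expf_neq0 4 y0)).
  rewrite divfK ?expf_neq0 // mulN1r; apply/eqP; rewrite -subr_eq0 opprK e //.
have a0 : a != 0 by rewrite /a mulf_neq0 ?invr_eq0.
have ap : a ^+ p = a by have := expf_card a; rewrite card_Fp.
exact: (@key_gen _ a p (@two_neq0 p pp op) a0 a4 ap op).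
Qed.

Theorem proposition3p1 (n u v r s : int) (p : nat) :
  n = u ^+ 4 + v ^+ 4 ->
  n = r ^+ 4 + s ^+ 4 ->
  gcdz (gcdz u v) (gcdz r s) = 1 ->
  prime p -> odd p -> (p%:Z %| n)%Z ->
  (p %% 8 = 1)%N.
Proof.
move=> e1 e2 g pp op dn.
have n0 : (n%:~R : 'F_p) = 0 by apply/eqP; rewrite Fp_int0.
have H : forall x y : int, n = x ^+ 4 + y ^+ 4 ->
    (p %% 8 = 1)%N \/ ((p %| `|x|%N) && (p %| `|y|%N))%N.
  move=> x y e.
  have e' : (x%:~R : 'F_p) ^+ 4 + (y%:~R : 'F_p) ^+ 4 = 0.
    by rewrite -n0 e rmorphD !rmorphXn.
  have [x0|x0] := eqVneq (x%:~R : 'F_p) 0.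
    move: e'; rewrite x0 expr0n add0r => /eqP; rewrite expf_eq0 /= => y0.
    by right; rewrite -!Fp_int0 // x0 y0.
  have [y0|y0] := eqVneq (y%:~R : 'F_p) 0.
    by move: e'; rewrite y0 expr0n addr0 => /eqP; rewrite expf_eq0 /= (negbTE x0).
  by left; apply: (@key p _ _ pp op x0 y0 e').
case: (H u v e1) => // /andP [du dv].
case: (H r s e2) => // /andP [dr ds].
have : (p %| gcdn (gcdn `|u| `|v|) (gcdn `|r| `|s|))%N.
  by rewrite !dvdn_gcd du dv dr ds.
move: g; rewrite /gcdz /= => -[->]; rewrite dvdn1 => /eqP p1.
by move: pp; rewrite p1.
Qed.
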